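(* Let $S$ be a sampling of $[n]$ which is non-vacuous, has $c_1$-uniform support with $c_1\ge1$, and is $\tau$-uniform. Then $\frac{|\mathrm{supp}(S)|}{c_1}=\frac n\tau$. Consequently, for $\mathbf W=\mathrm{diag}(w_1,\dots,w_n)\succ0$ and the minibatch sketch $\mathbf S=\mathbf I_S$, the stochastic condition number satisfies $\kappa=p_1=\dots=p_n=\frac\tau n=\frac{c_1}{|\mathrm{supp}(S)|}$.
   Context: $p_C=\Pr(S=C)$, $p_i=\Pr(i\in S)$, $\mathrm{supp}(S)=\{C:p_C>0\}$; non-vacuous: $p_\emptyset=0$; $c_1$-uniform support: $|\{C\in\mathrm{supp}(S):i\in C\}|=c_1$ for all $i$; $\tau$-uniform: $p_i=p_j$ for all $i,j$ and $|S|=\tau$ a.s. $\mathbf I_S$ is the column submatrix of the identity with columns in $S$; $\Pi_{\mathbf S}=\mathbf S(\mathbf S^\top\mathbf W\mathbf S)^\dagger\mathbf S^\top\mathbf W$; $\kappa=\lambda_{\min}(\mathbb{E}[\Pi_{\mathbf S}])$. *)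

(* Defs.v *)
From HB Require Import structures.
From mathcomp Require Import all_boot all_order all_algebra.
From mathcomp Require Import reals.
Set Implicit Arguments. Unset Strict Implicit. Unset Printing Implicit Defensive.
Import Order.TTheory GRing.Theory Num.Theory.
Local Open Scope ring_scope.

(* A sampling S of [n] = {0,..,n-1} is a probability distribution
   p C = Pr(S = C) on subsets C of 'I_n. *)
Definition is_sampling (R : realType) (n : nat) (p : {ffun {set 'I_n} -> R}) :=
  (forall C, 0 <= p C) /\ \sum_(C : {set 'I_n}) p C = 1.

Definition supp (R : realType) (n : nat) (p : {ffun {set 'I_n} -> R})
  : {set {set 'I_n}} := [set C | 0 < p C].

Definition incl_prob (R : realType) (n : nat) (p : {ffun {set 'I_n} -> R}) (i : 'I_n) : R :=
  \sum_(C : {set 'I_n} | i \in C) p C.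

Definition non_vacuous (R : realType) (n : nat) (p : {ffun {set 'I_n} -> R}) :=
  p set0 = 0.

Definition uniform_support (R : realType) (n : nat) (p : {ffun {set 'I_n} -> R}) (c1 : nat) :=
  forall i : 'I_n, #|[set C in supp p | i \in C]| = c1.

Definition tau_uniform (R : realType) (n : nat) (p : {ffun {set 'I_n} -> R}) (tau : nat) :=
  (forall i j : 'I_n, incl_prob p i = incl_prob p j) /\
  (forall C, 0 < p C -> #|C| = tau).

(* Moore--Penrose pseudo-inverse via a full-rank factorisation A = B *m C
   (B = col_base A, C = row_base A):  A^+ = C^T (C C^T)^-1 (B^T B)^-1 B^T. *)
Definition mp_pinv (R : realType) (m k : nat) (A : 'M[R]_(m, k)) : 'M[R]_(k, m) :=
  let B := col_base A in let C := row_base A in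
  (C^T *m invmx (C *m C^T)) *m (invmx (B^T *m B) *m B^T).

(* I_C : columns of the n x n identity indexed by C (in increasing order) *)
Definition col_sketch (R : realType) (n : nat) (C : {set 'I_n}) : 'M[R]_(n, #|C|) :=
  \matrix_(i < n, j < #|C|) (i == enum_val j)%:R.

Definition proj_sketch (R : realType) (n k : nat) (W : 'M[R]_n) (S : 'M[R]_(n, k)) : 'M[R]_n :=
  S *m mp_pinv (S^T *m W *m S) *m S^T *m W.

Definition expected_proj (R : realType) (n : nat) (p : {ffun {set 'I_n} -> R}) (W : 'M[R]_n)
  : 'M[R]_n := \sum_(C : {set 'I_n}) p C *: proj_sketch W (col_sketch R C).

Definition lambda_min (R : realType) (n : nat) (A : 'M[R]_n) : R :=
  inf (fun a : R => is_true (eigenvalue A a)).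

(* Main.v *)
Require Import Defs.
From HB Require Import structures.
From mathcomp Require Import all_boot all_order all_algebra.
From mathcomp Require Import reals.
From mathcomp Require boolp classical_sets.
Import Order.TTheory GRing.Theory Num.Theory.
Local Open Scope ring_scope.

Lemma gram_unit (R : realType) r k (M : 'M[R]_(r, k)) :
  row_free M -> M *m M^T \in unitmx.
Proof.
move=> fM; rewrite -row_free_unit; apply: inj_row_free => v.
rewrite mulmxA => h.
have u0 : v *m M = 0.
  have e : (v *m M) *m (v *m M)^T = 0 by rewrite trmx_mul mulmxA h mul0mx.
  move/matrixP: e => /(_ ord0 ord0).
  rewrite !mxE => /eqP; rewrite psumr_eq0 => [/allP H|j _]; last first.
    by rewrite !mxE -expr2 sqr_ge0.
  apply/matrixP => i j; rewrite !mxE (ord1 i).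
  have := H j (mem_index_enum j); rewrite !mxE -expr2 /= sqrf_eq0 => /eqP ->.
  by [].
by apply/eqP; rewrite -(mulmx_free_eq0 _ fM) u0.
Qed.

Lemma fact_id (R : realType) k r (B : 'M[R]_(k, r)) (C : 'M[R]_(r, k)) :
  C *m C^T \in unitmx -> B^T *m B \in unitmx ->
  B *m C *m (C^T *m invmx (C *m C^T) *m (invmx (B^T *m B) *m B^T)) *m (B *m C) = B *m C.
Proof.
move=> uC uB.
rewrite !mulmxA -(mulmxA B C C^T) (mulmxK uC).
by rewrite -(mulmxA _ B^T B) (mulmxKV uB).
Qed.

Lemma pinv_unit (R : realType) k (A : 'M[R]_k) :
  A \in unitmx -> mp_pinv A = invmx A.
Proof.
move=> uA.
have uC : row_base A *m (row_base A)^T \in unitmx by apply: gram_unit; exact: row_base_free.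
have uB : (col_base A)^T *m col_base A \in unitmx.
  rewrite -[X in _ *m X]trmxK.
  apply: gram_unit; rewrite /row_free mxrank_tr; exact: col_base_full.
have key : A *m mp_pinv A *m A = A.
  by have := @fact_id _ _ _ _ _ uC uB; rewrite mulmx_base.
move: key; move: (mp_pinv A) => P key.
have := congr1 (fun X => invmx A *m X *m invmx A) key => /=.
rewrite !mulmxA !(mulmxK uA) !(mulVmx uA) !mul1mx.
by [].
Qed.
Lemma gram_S (R : realType) n (w : 'I_n -> R) (C : {set 'I_n}) :
  (col_sketch R C)^T *m diag_mx (\row_i w i) *m col_sketch R C
  = diag_mx (\row_j w (enum_val j)).
Proof.
rewrite mul_mx_diag; apply/matrixP => j j'; rewrite !mxE.
rewrite (bigD1 (enum_val j)) //= big1 ?addr0; last first.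
  by move=> i /negPf ni; rewrite !mxE ni mul0r mul0r.
rewrite !mxE !eqxx mul1r.
case: (eqVneq j j') => [<-|nj]; first by rewrite eqxx mulr1.
have -> : (enum_val j == enum_val j') = false.
  by apply/negbTE; apply: contra nj => /eqP/enum_val_inj ->.
by rewrite mulr0.
Qed.

Lemma proj_col (R : realType) n (w : 'I_n -> R) (hw : forall i, 0 < w i)
  (C : {set 'I_n}) :
  proj_sketch (diag_mx (\row_i w i)) (col_sketch R C)
  = diag_mx (\row_i ((i \in C)%:R)).
Proof.
set W := diag_mx _; set S := col_sketch R C.
pose D : 'M[R]_#|C| := diag_mx (\row_j w (enum_val j)).
pose Di : 'M[R]_#|C| := diag_mx (\row_j (w (enum_val j))^-1).
have DDi : D *m Di = 1%:M.
  rewrite mul_mx_diag; apply/matrixP => j j'; rewrite !mxE.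
  case: (eqVneq j j') => [<-|nj]; last by rewrite mulr0n mul0r.
  by rewrite mulr1n mulfV // gt_eqF.
have uD : D \in unitmx by case: (mulmx1_unit DDi).
have iD : invmx D = Di.
  by rewrite -[invmx D]mulmx1 -DDi mulmxA mulVmx // mul1mx.
rewrite /proj_sketch -/S -/W gram_S -/D pinv_unit // iD.
rewrite mul_mx_diag /W mul_mx_diag; apply/matrixP => i k; rewrite !mxE.
case iC : (i \in C); last first.
  rewrite big1 ?mul0r ?mul0rn // => j _; rewrite !mxE.
  have -> : (i == enum_val j) = false.
    by apply/negbTE; apply: contraFN iC => /eqP ->; exact: enum_valP.
  by rewrite !mul0r.
rewrite (bigD1 (enum_rank_in iC i)) //= big1 ?addr0; last first.
  move=> j nj; rewrite !mxE.
  have -> : (i == enum_val j) = false.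
    apply/negbTE; apply: contra nj => /eqP e.
    by apply/eqP/enum_val_inj; rewrite enum_rankK_in.
  by rewrite !mul0r.
rewrite !mxE enum_rankK_in // (introT eqP (erefl i)) mul1r.
case: (eqVneq i k) => [<-|nk]; last by rewrite mulr0 mul0r.
by rewrite mulr1 mulVf // gt_eqF.
Qed.

Lemma lmin_scalar (R : realType) n (c : R) (i0 : 'I_n) :
  lambda_min (c%:M : 'M[R]_n) = c.
Proof.
rewrite /lambda_min.
have -> : (fun a : R => is_true (eigenvalue (c%:M : 'M[R]_n) a)) = classical_sets.set1 c.
  apply: boolp.funext => a; apply: boolp.propext; split.
    move/eigenvalueP => [v]; rewrite mul_mx_scalar => e nv.
    have : (c - a) *: v == 0 by rewrite scalerBl e subrr.
    by rewrite scaler_eq0 (negPf nv) orbF subr_eq0 => /eqP ->.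
  move=> ->; apply/eigenvalueP; exists (const_mx 1); first by rewrite mul_mx_scalar.
  apply/eqP => /matrixP/(_ ord0 i0); rewrite !mxE => /eqP; by rewrite oner_eq0.
exact: inf1.
Qed.

Theorem lemma4p8 (R : realType) (n : nat) (p : {ffun {set 'I_n} -> R})
  (c1 tau : nat) (w : 'I_n -> R) :
  is_sampling p -> non_vacuous p -> (1 <= c1)%N -> uniform_support p c1 ->
  tau_uniform p tau ->
  (forall i, 0 < w i) ->
  let kappa := lambda_min (expected_proj p (diag_mx (\row_i w i))) in
  (#|supp p|%:R / c1%:R = n%:R / tau%:R :> R) /\
  (forall i : 'I_n, kappa = incl_prob p i) /\
  (forall i : 'I_n, incl_prob p i = tau%:R / n%:R) /\
  (tau%:R / n%:R = c1%:R / #|supp p|%:R :> R).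
Proof.
move=> [p0 p1] nv c1pos usupp [peq ptau] hw kappa.
have [C0 pC0] : exists C, 0 < p C.
  case/boolP: [exists C, 0 < p C] => [/existsP //|/existsPn H].
  move: p1; rewrite big1 => [/eqP|C _]; first by rewrite eq_sym oner_eq0.
  by apply/eqP; rewrite eq_le p0 andbT leNgt H.
have C0n : C0 != set0 by apply: contraTneq pC0 => ->; rewrite nv ltxx.
have taupos : (0 < tau)%N by rewrite -(ptau _ pC0) card_gt0.
have npos : (0 < n)%N.
  by apply: leq_trans taupos _; rewrite -(ptau _ pC0) -[X in (_ <= X)%N]card_ord max_card.
have sumincl : \sum_i incl_prob p i = tau%:R.
  rewrite /incl_prob.
  under eq_bigr => i _ do rewrite big_mkcond /=.
  rewrite exchange_big /=.
  transitivity (\sum_C tau%:R * p C); last by rewrite -mulr_sumr p1 mulr1.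
  apply: eq_bigr => C _.
  rewrite -big_mkcond /= sumr_const.
  have -> : #|[pred i | i \in C]| = #|C| by apply: eq_card.
  have [/eqP pz|pnz] := boolP (p C == 0); first by rewrite pz mul0rn mulr0.
  have pCpos : 0 < p C by rewrite lt_def pnz p0.
  by rewrite ptau // mulr_natl.
have incl_val : forall i, incl_prob p i = tau%:R / n%:R.
  move=> i; move: sumincl.
  under eq_bigr => j _ do rewrite (peq j i).
  rewrite sumr_const card_ord => <-.
  by rewrite -(mulr_natr (incl_prob p i) n) mulfK // pnatr_eq0 -lt0n.
have count : (n * c1 = #|supp p| * tau)%N.
  have e1 : (\sum_(i : 'I_n) #|[set C in supp p | i \in C]| = n * c1)%N.
    under eq_bigr => i _ do rewrite usupp.
    by rewrite sum_nat_const card_ord.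
  rewrite -e1.
  under eq_bigr => i _ do rewrite -sum1_card big_mkcond /=.
  rewrite exchange_big /= -sum_nat_const [RHS]big_mkcond /=; apply: eq_bigr => C _.
  under eq_bigr => i _ do rewrite inE.
  case sC: (C \in supp p) => /=; last by rewrite big1.
  move: sC; rewrite inE => /ptau <-.
  by rewrite -sum1_card [RHS]big_mkcond.
have taun0 : (tau%:R : R) != 0 by rewrite pnatr_eq0 -lt0n.
have nn0 : (n%:R : R) != 0 by rewrite pnatr_eq0 -lt0n.
have c1n0 : (c1%:R : R) != 0 by rewrite pnatr_eq0 -lt0n.
have suppn0 : (#|supp p|%:R : R) != 0.
  rewrite pnatr_eq0 -lt0n; apply/card_gt0P; exists C0; by rewrite inE.
split.
  by apply/eqP; rewrite eqr_div // -!natrM count.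
split.
  move=> i; rewrite incl_val /kappa.
  have -> : expected_proj p (diag_mx (\row_i w i)) = (tau%:R / n%:R)%:M.
    rewrite /expected_proj.
    under eq_bigr => C _ do rewrite proj_col //.
    apply/matrixP => j k; rewrite summxE.
    under eq_bigr => C _ do rewrite !mxE.
    rewrite mxE -(incl_val j) /incl_prob big_mkcond /=.
    have [jk|njk] := eqVneq j k; last first.
      by rewrite mulr0n big1 // => C _; rewrite mulr0n mulr0.
    by rewrite [RHS]big_mkcond; apply: eq_bigr => C _; rewrite mulr1n; case: (j \in C); rewrite ?mulr1 ?mulr0.
  exact: (@lmin_scalar R n _ i).
split; first exact: incl_val.
by apply/eqP; rewrite eqr_div // -!natrM [(tau * _)%N]mulnC -count [(c1 * n)%N]mulnC.
Qed.
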